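(* In the binary setting below, define $\mathrm{CL}_{\mathrm{induced}}:=-\mathbb{E}[\mathrm{Var}(S-C\mid S_B)]$ and $\mathrm{GL}_{\mathrm{induced}}:=\mathbb{E}[\mathrm{Var}(C\mid S_B)]$. Then $$\mathrm{CL}_{\mathrm{induced}}+\mathrm{GL}_{\mathrm{induced}}=\mathbb{E}\big[2\,\mathrm{Cov}(S,C\mid S_B)-\mathrm{Var}(S\mid S_B)\big],$$ and $$-\mathbb{E}\Big[\sqrt{\mathrm{Var}(S\mid S_B)}\big(2\sqrt{\mathrm{Var}(C\mid S_B)}+\sqrt{\mathrm{Var}(S\mid S_B)}\big)\Big]\le \mathrm{CL}_{\mathrm{induced}}+\mathrm{GL}_{\mathrm{induced}}\le \mathbb{E}\Big[\sqrt{\mathrm{Var}(S\mid S_B)}\big(2\sqrt{\mathrm{Var}(C\mid S_B)}-\sqrt{\mathrm{Var}(S\mid S_B)}\big)\Big].$$ If moreover $[0,1]$ is divided into $N$ equal-width bins, then $$-\tfrac1N\mathbb{E}\big[\sqrt{C_B(1-C_B)}\big]-\tfrac{1}{4N^2}\le \mathrm{CL}_{\mathrm{induced}}+\mathrm{GL}_{\mathrm{induced}}\le \tfrac1N\mathbb{E}\big[\sqrt{C_B(1-C_B)}\big].$$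
   Context: Binary setting: $(X,Y)$ jointly distributed with $Y\in\{0,1\}$; $Q:=P(Y=1\mid X)$; $S=f(X)\in[0,1]$ is a classifier's confidence score for the positive class; $C:=\mathbb{E}[Q\mid S]$. Given a partition of $[0,1]$ into bins $\mathcal{B}_1,\dots,\mathcal{B}_J$ (intervals), the binned score $S_B$ equals $\mathbb{E}[S\mid S\in\mathcal{B}_j]$ on $\{S\in\mathcal{B}_j\}$, and $C_B:=\mathbb{E}[Q\mid S_B]=\mathbb{E}[C\mid S_B]$. $\mathrm{Var}(\cdot\mid S_B)$ and $\mathrm{Cov}(\cdot,\cdot\mid S_B)$ denote ordinary conditional variance and covariance. ''$N$ equal-width bins'' means the bins are the intervals of length $1/N$ partitioning $[0,1]$. *)

(* Defs.v *)
From HB Require Import structures.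
From mathcomp Require Import all_boot all_order all_algebra.
From mathcomp Require Import all_classical all_reals all_analysis.
Set Implicit Arguments. Unset Strict Implicit. Unset Printing Implicit Defensive.
Import Order.TTheory GRing.Theory Num.Theory.
Import numFieldNormedType.Exports.
Local Open Scope classical_set_scope.
Local Open Scope ring_scope.

(* Elementary conditional expectation of X given an event A:
   E[X 1_A] / P(A)  (equal to 0 if P(A) = 0, which is irrelevant a.s.). *)
Definition condE_ev d (T : measurableType d) (R : realType)
  (P : probability T R) (A : set T) (X : T -> R) : R :=
  fine ('E_P[(fun t => X t * \1_A t)%R])%E / fine (P A).

(* Conditional expectation given a discrete (finitely-valued) real random
   variable Z, as a random variable: on {Z = z} it equals E[X | Z = z]. *)
Definition condE_given d (T : measurableType d) (R : realType)
  (P : probability T R) (Z : T -> R) (X : T -> R) : T -> R :=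
  fun t => condE_ev P (Z @^-1` [set Z t]) X.

Definition condVar_given d (T : measurableType d) (R : realType)
  (P : probability T R) (Z : T -> R) (X : T -> R) : T -> R :=
  condE_given P Z (fun u => (X u - condE_given P Z X u) ^+ 2).

Definition condCov_given d (T : measurableType d) (R : realType)
  (P : probability T R) (Z : T -> R) (X W : T -> R) : T -> R :=
  condE_given P Z (fun u => (X u - condE_given P Z X u)
                            * (W u - condE_given P Z W u)).

Definition is_cond_exp d (T : measurableType d) (R : realType)
  (P : probability T R) d' (T' : measurableType d')
  (Z : T -> T') (X W : T -> R) : Prop :=
  [/\ exists g : T' -> R, measurable_fun [set: T'] g /\ W = g \o Z,
      P.-integrable [set: T] (EFin \o W) &
      forall A : set T', measurable A ->
        ('E_P[(fun t => X t * \1_(Z @^-1` A) t)%R]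
         = 'E_P[(fun t => W t * \1_(Z @^-1` A) t)%R])%E].

Definition interval_partition01 (R : realType) (J : nat)
  (B : 'I_J -> set R) : Prop :=
  [/\ forall j, is_interval (B j),
      forall j k, j != k -> B j `&` B k = set0 &
      \bigcup_(j in [set: 'I_J]) B j = `[0, 1]%classic].

Definition equal_width_bins (R : realType) (J : nat)
  (B : 'I_J -> set R) : Prop :=
  forall j : 'I_J,
    `](j%:R / J%:R), ((j.+1)%:R / J%:R)[%classic `<=` B j /\
    B j `<=` `[(j%:R / J%:R), ((j.+1)%:R / J%:R)]%classic.

Definition binned_score d (T : measurableType d) (R : realType)
  (P : probability T R) (J : nat) (B : 'I_J -> set R) (S : T -> R) : T -> R :=
  fun t => \sum_(j < J) \1_(S @^-1` B j) t * condE_ev P (S @^-1` B j) S.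

(* Main.v *)
Require Import Defs.
From HB Require Import structures.
From mathcomp Require Import all_boot all_order all_algebra.
From mathcomp Require Import all_classical all_reals all_analysis.
From mathcomp Require Import ring lra measurable_realfun.
Import Order.TTheory GRing.Theory Num.Theory.
Set Implicit Arguments. Unset Strict Implicit. Unset Printing Implicit Defensive.
Import numFieldNormedType.Exports.
Local Open Scope classical_set_scope.
Local Open Scope ring_scope.

Section Aux.
Context d (T : measurableType d) (R : realType) (P : probability T R).
Implicit Types (A : set T) (X Y : T -> R).

Definition bm (X : T -> R) := measurable_fun setT X /\ exists M : R, forall t, `|X t| <= M.

Lemma bm_int X : bm X -> P.-integrable setT (EFin \o X).
Proof.
case=> mX [M hM]; apply: measurable_bounded_integrable => //.

- exact: (le_lt_trans (probability_le1 P measurableT) (ltry 1)).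
- exists M; split; first exact: num_real.
  by move=> y My t _ /=; exact: le_trans (hM t) (ltW My).
Qed.

Definition rE (X : T -> R) : R := fine ('E_P[X])%E.

Lemma rEE X : bm X -> ('E_P[X] = (rE X)%:E)%E.
Proof.
move=> h; rewrite /rE fineK //; rewrite unlock; apply: integrable_fin_num => //; exact: bm_int h.
Qed.

Lemma bm_cst a : bm (fun _ => a).
Proof. by split; [exact: measurable_cst | exists `|a|]. Qed.

Lemma bmD X Y : bm X -> bm Y -> bm (fun t => X t + Y t).
Proof.
case=> mX [M hM] [mY [N hN]]; split; first exact: measurable_funD.
by exists (M + N) => t; rewrite (le_trans (ler_normD _ _))// lerD.
Qed.

Lemma bmM X Y : bm X -> bm Y -> bm (fun t => X t * Y t).
Proof.
case=> mX [M hM] [mY [N hN]]; split; first exact: measurable_funM.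
exists (M * N) => t; rewrite normrM ler_pM //.
Qed.

Lemma bmZ a X : bm X -> bm (fun t => a * X t).
Proof. by move=> h; apply: bmM => //; exact: bm_cst. Qed.

Lemma bmN X : bm X -> bm (fun t => - X t).
Proof.
by move=> h; have := bmZ (-1) h; congr bm; apply/funext => t; rewrite mulN1r.
Qed.

Lemma bmB X Y : bm X -> bm Y -> bm (fun t => X t - Y t).
Proof. by move=> hX hY; apply: bmD => //; exact: bmN. Qed.

Lemma bm_indic A : measurable A -> bm (\1_A).
Proof.
move=> mA; split; first exact: measurable_indic.
by exists 1 => t; rewrite indicE; case: (_ \in _); rewrite ?normr1 ?normr0.
Qed.

Lemma bmX2 X : bm X -> bm (fun t => X t ^+ 2).
Proof. by move=> h; apply: bmM. Qed.

Lemma rED X Y : bm X -> bm Y -> rE (fun t => X t + Y t) = rE X + rE Y.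
Proof.
move=> hX hY.
have : ('E_P[(fun t => X t + Y t)%R] = 'E_P[X] + 'E_P[Y])%E.
  rewrite unlock; under eq_integral do rewrite EFinD.
  exact: (integralD_EFin _ (bm_int hX) (bm_int hY)).
by rewrite (rEE hX) (rEE hY) (rEE (bmD hX hY)) -EFinD => -[].
Qed.

Lemma rEZ a X : bm X -> rE (fun t => a * X t) = a * rE X.
Proof.
move=> hX.
have : ('E_P[(fun t => a * X t)%R] = a%:E * 'E_P[X])%E.
  rewrite unlock; under eq_integral do rewrite EFinM.
  exact: (integralZl _ (bm_int hX)).
by rewrite (rEE hX) (rEE (bmZ a hX)) -EFinM => -[].
Qed.

Lemma rE_ge0 X : (forall t, 0 <= X t) -> 0 <= rE X.
Proof. by move=> h; apply: fine_ge0; apply: expectation_ge0. Qed.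

Lemma rE_cst a : rE (fun _ => a) = a.
Proof. by rewrite /rE (expectation_cst P a). Qed.

Lemma rE_indic A : measurable A -> rE (\1_A) = fine (P A).
Proof. by move=> mA; rewrite /rE expectation_indic. Qed.


Lemma bm_sum (I : Type) (s : seq I) (F : I -> T -> R) :
  (forall i, bm (F i)) -> bm (fun t => \sum_(i <- s) F i t).
Proof.
move=> hF; elim: s => [|i s IH].
  by have := bm_cst 0; congr bm; apply/funext => t; rewrite big_nil.
have := bmD (hF i) IH; congr bm; apply/funext => t; by rewrite big_cons.
Qed.

Lemma rE_sum (I : Type) (s : seq I) (F : I -> T -> R) :
  (forall i, bm (F i)) -> rE (fun t => \sum_(i <- s) F i t) = \sum_(i <- s) rE (F i).
Proof.
move=> hF; elim: s => [|i s IH].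
  rewrite big_nil; transitivity (rE (fun _ : T => 0)); last exact: rE_cst.
  by congr rE; apply/funext => t; rewrite big_nil.
rewrite big_cons -IH -rED //; last exact: bm_sum.
by congr rE; apply/funext => t; rewrite big_cons.
Qed.

Lemma rE_lin a b X Y : bm X -> bm Y ->
  rE (fun t => a * X t + b * Y t) = a * rE X + b * rE Y.
Proof.
move=> hX hY; rewrite rED; try exact: bmZ.
by rewrite !rEZ.
Qed.

Lemma rE_le X Y : bm X -> bm Y -> (forall t, X t <= Y t) -> rE X <= rE Y.
Proof.
move=> hX hY h; rewrite -subr_ge0.
have -> : rE Y - rE X = rE (fun t => 1 * Y t + (-1) * X t).
  by rewrite rE_lin// mul1r mulN1r.
by apply: rE_ge0 => t; rewrite mul1r mulN1r subr_ge0 h.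
Qed.

Definition e (A : set T) (X : T -> R) : R := rE (fun t => X t * \1_A t).

Lemma bmI A X : measurable A -> bm X -> bm (fun t => X t * \1_A t).
Proof. by move=> mA hX; apply: bmM => //; exact: bm_indic. Qed.

Lemma e_congr A X Y : (forall t, A t -> X t = Y t) -> e A X = e A Y.
Proof.
move=> h; rewrite /e; congr rE; apply/funext => t; rewrite indicE.
by case: (boolP (t \in A)) => ht; [rewrite h//; exact: set_mem | rewrite !mulr0].
Qed.

Lemma eD A X Y : measurable A -> bm X -> bm Y ->
  e A (fun t => X t + Y t) = e A X + e A Y.
Proof.
move=> mA hX hY; rewrite /e -rED; try exact: bmI.
by congr rE; apply/funext => t; rewrite mulrDl.
Qed.

Lemma eZ A a X : measurable A -> bm X -> e A (fun t => a * X t) = a * e A X.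
Proof.
move=> mA hX; rewrite /e -rEZ; last exact: bmI.
by congr rE; apply/funext => t; rewrite mulrA.
Qed.

Lemma e_lin A a b X Y : measurable A -> bm X -> bm Y ->
  e A (fun t => a * X t + b * Y t) = a * e A X + b * e A Y.
Proof.
move=> mA hX hY; rewrite eD //; try exact: bmZ.
by rewrite !eZ.
Qed.

Lemma e_ge0 A X : (forall t, A t -> 0 <= X t) -> 0 <= e A X.
Proof.
move=> h; apply: rE_ge0 => t; rewrite indicE.
case: (boolP (t \in A)) => ht; last by rewrite mulr0.
by rewrite mulr1 h//; exact: set_mem.
Qed.

Lemma e_le A X Y : measurable A -> bm X -> bm Y ->
  (forall t, A t -> X t <= Y t) -> e A X <= e A Y.
Proof.
move=> mA hX hY h; rewrite -subr_ge0.
have -> : e A Y - e A X = e A (fun t => 1 * Y t + (-1) * X t).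
  by rewrite e_lin// mul1r mulN1r.
by apply: e_ge0 => t At; rewrite mul1r mulN1r subr_ge0 h.
Qed.

Lemma e1 A : measurable A -> e A (fun _ => 1) = fine (P A).
Proof.
move=> mA; rewrite /e -rE_indic//; congr rE; apply/funext => t; exact: mul1r.
Qed.

Lemma e_cst A c : measurable A -> e A (fun _ => c) = c * fine (P A).
Proof.
move=> mA; rewrite -e1// -eZ//; last exact: bm_cst.
by apply: e_congr => t _; rewrite mulr1.
Qed.

Lemma e_CS A X Y : measurable A -> bm X -> bm Y ->
  e A (fun u => X u * Y u) ^+ 2 <= e A (fun u => X u ^+ 2) * e A (fun u => Y u ^+ 2).
Proof.
move=> mA hX hY.
set a := e A (fun u => X u ^+ 2); set b := e A (fun u => X u * Y u);
set c := e A (fun u => Y u ^+ 2).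
have hXX : bm (fun u => X u ^+ 2) by apply: bmM.
have hXY : bm (fun u => X u * Y u) by apply: bmM.
have hYY : bm (fun u => Y u ^+ 2) by apply: bmM.
have H r : 0 <= a - 2 * r * b + r ^+ 2 * c.
  have -> : a - 2 * r * b + r ^+ 2 * c =
     e A (fun u => 1 * (X u ^+ 2) + (- (2 * r)) * (X u * Y u) + r ^+ 2 * Y u ^+ 2).
    rewrite eD //; try (by apply: bmD; apply: bmZ); try (by apply: bmZ).
    by rewrite e_lin // eZ // mul1r mulNr -/a -/b -/c.
  by apply: e_ge0 => u _; rewrite mul1r (_ : _ + _ = (X u - r * Y u) ^+ 2);
    [exact: sqr_ge0 | ring].
have a0 : 0 <= a by apply: e_ge0 => u _; exact: sqr_ge0.
have c0 : 0 <= c by apply: e_ge0 => u _; exact: sqr_ge0.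
have [c00|cpos] := eqVneq c 0.
  have [b00|bn0] := eqVneq b 0; first by rewrite b00 c00 expr0n mulr0.
  have := H ((a + 1) / (2 * b)); rewrite c00 mulr0 addr0.
  have -> : 2 * ((a + 1) / (2 * b)) * b = a + 1.
    by field.
  by move=> h; exfalso; move: h; rewrite opprD addrA subrr add0r oppr_ge0 leNgt ltr01.
have cp : 0 < c by rewrite lt_def cpos c0.
have := H (b / c).
have -> : a - 2 * (b / c) * b + (b / c) ^+ 2 * c = (a * c - b ^+ 2) / c.
  by field.
by rewrite pmulr_lge0 ?invr_gt0 // subr_ge0 mulrC.
Qed.

End Aux.

Section Bins.
Context d (T : measurableType d) (R : realType) (P : probability T R).
Context (S : T -> R) (J : nat) (B : 'I_J -> set R).
Hypothesis mS : measurable_fun setT S.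
Hypothesis S01 : forall t, 0 <= S t <= 1.
Hypothesis hB : interval_partition01 B.

Lemma ex_bin t : exists j, B j (S t).
Proof.
case: hB => _ _ cov.
have : `[0, 1]%classic (S t) by rewrite /= in_itv /= S01.
by rewrite -cov => -[j _ Bj]; exists j.
Qed.

Lemma uniq_bin j k x : B j x -> B k x -> j = k.
Proof.
case: hB => _ disj _ Bj Bk; apply/eqP; apply: contraT => jk.
have : (B j `&` B k) x by split.
by rewrite (disj _ _ jk).
Qed.

Lemma mI j : measurable (S @^-1` B j).
Proof.
case: hB => iv _ _; rewrite -[_ @^-1` _]setTI; apply: mS => //.
exact: is_interval_measurable.
Qed.

Definition cb j := condE_ev P (S @^-1` B j) S.

Lemma sum_bin j t (F : 'I_J -> R) : B j (S t) ->
  \sum_(k < J) \1_(S @^-1` B k) t * F k = F j.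
Proof.
move=> Bj; rewrite (bigD1 j) //= big1 ?addr0.
  by rewrite indicE mem_set // mul1r.
move=> k kj; rewrite indicE memNset ?mul0r //= => Bk.
by move/eqP: kj; apply; exact: uniq_bin Bk Bj.
Qed.

Notation SB := (binned_score P B S).

Lemma SB_bin j t : B j (S t) -> SB t = cb j.
Proof. by move=> Bj; rewrite /binned_score (sum_bin _ Bj). Qed.

Lemma bm_SB (H : R -> R) : bm (fun t => H (SB t)).
Proof.
have E : (fun t => H (SB t)) = (fun t => \sum_(k < J) \1_(S @^-1` B k) t * H (cb k)).
  apply/funext => t; have [j Bj] := ex_bin t.
  by rewrite (SB_bin Bj) (sum_bin _ Bj).
split.
  rewrite E; apply: measurable_sum => k; apply: measurable_funM.
    exact: measurable_indic (mI k).
  exact: measurable_cst.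
exists (\sum_(k < J) `|H (cb k)|) => t; have [j Bj] := ex_bin t.
rewrite (SB_bin Bj) (bigD1 j) //= lerDl; exact: sumr_ge0.
Qed.

Lemma bmG (G : T -> R) : (forall u v, SB u = SB v -> G u = G v) -> bm G.
Proof.
move=> hG.
pose H z := if pselect (exists u, SB u = z) is left e then G (projT1 (cid e)) else 0.
suff -> : G = (fun t => H (SB t)) by exact: bm_SB.
apply/funext => t; rewrite /H; case: pselect => [e|]; last by case; exists t.
by case: cid => u /= hu; rewrite (hG _ _ hu).
Qed.

Lemma mL t : measurable (SB @^-1` [set SB t]).
Proof.
have [m _] := bm_SB id; rewrite -[_ @^-1` _]setTI; exact: m.
Qed.

Lemma mLz z : measurable (SB @^-1` [set z]).
Proof.
have [m _] := bm_SB id; rewrite -[_ @^-1` _]setTI; exact: m.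
Qed.

Lemma condE_L (X : T -> R) t u : SB u = SB t ->
  condE_given P SB X u = condE_ev P (SB @^-1` [set SB t]) X.
Proof. by rewrite /condE_given => ->. Qed.

End Bins.

Ltac bmt := repeat first [ apply: bmX2 | apply: bmD | apply: bmB | apply: bmM
  | apply: bmZ | apply: bm_cst | assumption ].

Section Main.
Context d (T : measurableType d) (R : realType) (P : probability T R).
Context (S C : T -> R) (J : nat) (B : 'I_J -> set R).
Hypothesis mS : measurable_fun setT S.
Hypothesis S01 : forall t, 0 <= S t <= 1.
Hypothesis mC : measurable_fun setT C.
Hypothesis C01 : forall t, 0 <= C t <= 1.
Hypothesis hB : interval_partition01 B.

Notation SB := (binned_score P B S).
Let L t := SB @^-1` [set SB t].
Let p t := fine (P (L t)).

Lemma bmS : bm S.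
Proof. split => //; exists 1 => t; have /andP[h0 h1] := S01 t; by rewrite ger0_norm. Qed.
Lemma bmC : bm C.
Proof. split => //; exists 1 => t; have /andP[h0 h1] := C01 t; by rewrite ger0_norm. Qed.

Lemma p_ge0 t : 0 <= p t.
Proof. exact: fine_ge0. Qed.

Lemma condEE X t : condE_given P SB X t = e P (L t) X / p t.
Proof. by []. Qed.

Lemma CovE X Y t : condCov_given P SB X Y t =
  e P (L t) (fun u => (X u - e P (L t) X / p t) * (Y u - e P (L t) Y / p t)) / p t.
Proof.
rewrite /condCov_given condEE; congr (_ / _); apply: e_congr => u Lu.
by rewrite !(condE_L _ Lu).
Qed.

Lemma VarE X t : condVar_given P SB X t =
  e P (L t) (fun u => (X u - e P (L t) X / p t) ^+ 2) / p t.
Proof.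
rewrite /condVar_given condEE; congr (_ / _); apply: e_congr => u Lu.
by rewrite !(condE_L _ Lu).
Qed.

Lemma bmSB_fun (G : T -> R) : (forall u v, SB u = SB v -> G u = G v) -> bm G.
Proof. exact: bmG. Qed.


Lemma VS_ge0 X t : 0 <= condVar_given P SB X t.
Proof.
rewrite VarE; apply: divr_ge0; last exact: p_ge0.
by apply: e_ge0 => u _; exact: sqr_ge0.
Qed.

Lemma id_t t : condVar_given P SB (fun u => S u - C u) t =
  condVar_given P SB S t - 2 * condCov_given P SB S C t + condVar_given P SB C t.
Proof.
have bS := bmS; have bC := bmC.
rewrite !VarE CovE.
have mA : measurable (L t) by exact: mL.
set A := L t; set q := p t.
have E1 : e P A (fun u => S u - C u) = e P A S - e P A C.
  transitivity (e P A (fun u => 1 * S u + (-1) * C u)).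
    by apply: e_congr => u _; rewrite mul1r mulN1r.
  by rewrite e_lin // mul1r mulN1r.
rewrite E1.
set mS' := e P A S / q; set mC' := e P A C / q.
transitivity (e P A (fun u => (1 * (S u - mS') ^+ 2 + (-2) * ((S u - mS') * (C u - mC')))
    + (C u - mC') ^+ 2) / q).
  congr (_ / _); apply: e_congr => u _; rewrite /mS' /mC'; ring.
rewrite eD //; try by bmt.
rewrite e_lin //; try by bmt.
ring.
Qed.

Lemma cs_t t : condCov_given P SB S C t ^+ 2 <=
  condVar_given P SB S t * condVar_given P SB C t.
Proof.
have bS := bmS; have bC := bmC.
rewrite CovE !VarE.
have mA : measurable (L t) by exact: mL.
set A := L t; set q := p t.
set mS' := e P A S / q; set mC' := e P A C / q.
have /= h := @e_CS _ _ _ P A (fun u => S u - mS') (fun u => C u - mC') mA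
  ltac:(bmt) ltac:(bmt).
set a := e P A _ in h; set b := e P A _ in h; set c := e P A _ in h.
rewrite -/a -/b -/c.
have -> : (a / q) ^+ 2 = a ^+ 2 * (q^-1) ^+ 2 by ring.
have -> : b / q * (c / q) = (b * c) * (q^-1) ^+ 2 by ring.
apply: ler_wpM2r => //; exact: sqr_ge0.
Qed.

Lemma bounds_t t :
  - (Num.sqrt (condVar_given P SB S t) * (2 * Num.sqrt (condVar_given P SB C t)
      + Num.sqrt (condVar_given P SB S t)))
  <= 2 * condCov_given P SB S C t - condVar_given P SB S t
  <= Num.sqrt (condVar_given P SB S t) * (2 * Num.sqrt (condVar_given P SB C t)
      - Num.sqrt (condVar_given P SB S t)).
Proof.
have h := cs_t t.
have vs0 := VS_ge0 S t; have vc0 := VS_ge0 C t.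
set VS := condVar_given P SB S t in h vs0 *; set VC := condVar_given P SB C t in h vc0 *.
set Cv := condCov_given P SB S C t in h *.
have hC : `|Cv| <= Num.sqrt VS * Num.sqrt VC.
  by rewrite -sqrtrM // -sqrtr_sqr ler_wsqrtr.
move: hC; rewrite ler_norml => /andP[h1 h2].
set sS := Num.sqrt VS in h1 h2 *; set sC := Num.sqrt VC in h1 h2 *.
have eVS : VS = sS ^+ 2 by rewrite /sS sqr_sqrtr.
have sS0 : 0 <= sS by exact: sqrtr_ge0.
clearbody sS sC; rewrite eVS.
apply/andP; split; nra.
Qed.

Lemma VC_le t : condVar_given P SB C t <=
  condE_given P SB C t * (1 - condE_given P SB C t).
Proof.
have bC := bmC.
rewrite VarE condEE.
have mA : measurable (L t) by exact: mL.
set A := L t; set q := p t; set b := e P A C; set m := b / q.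
have E : e P A (fun u => (C u - m) ^+ 2) =
    e P A (fun u => C u ^+ 2) - 2 * m * b + m ^+ 2 * q.
  transitivity (e P A (fun u => (1 * C u ^+ 2 + (- (2 * m)) * C u) + m ^+ 2)).
    by apply: e_congr => u _; ring.
  rewrite eD //; try by bmt.
  rewrite e_lin //; try by bmt.
  by rewrite e_cst // /q /p /b /A; ring.
have hCC : e P A (fun u => C u ^+ 2) <= b.
  apply: e_le => //; first by bmt.
  by move=> u _; have /andP[c0 c1] := C01 u; nra.
rewrite E.
have q0 : 0 <= q by exact: p_ge0.
have [qz|qn] := eqVneq q 0.
  by rewrite /m qz !invr0 !mulr0 subr0 mulr1.
have qp : 0 < q by rewrite lt_def qn q0.
have bm_ : b = m * q by rewrite /m divfK.
rewrite ler_pdivrMr //; rewrite bm_ in hCC *; nra.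
Qed.

Lemma indic_L t u : (\1_(L t) u : R) = \sum_(k < J) \1_(S @^-1` B k) u * (cb P S B k == SB t)%:R.
Proof.
have [j Bj] := ex_bin S01 hB u.
rewrite (sum_bin hB _ Bj) indicE.
have Eu := SB_bin P hB Bj.
case: (boolP (cb P S B j == SB t)) => h.
  by rewrite mem_set //= /L /= Eu; exact/eqP.
by rewrite memNset //= /L /= Eu => /eqP; rewrite (negbTE h).
Qed.

Lemma eL_sum t X : bm X ->
  e P (L t) X = \sum_(k < J) (cb P S B k == SB t)%:R * e P (S @^-1` B k) X.
Proof.
move=> bX; rewrite /e.
transitivity (rE P (fun u => \sum_(k < J)
   (cb P S B k == SB t)%:R * (X u * \1_(S @^-1` B k) u))).
  congr rE; apply/funext => u; rewrite indic_L mulr_sumr.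
  by apply: eq_bigr => k _; ring.
rewrite rE_sum.
  by apply: eq_bigr => k _; rewrite rEZ //; apply: bmI => //; exact: mI.
by move=> k; apply: bmZ; apply: bmI => //; exact: mI.
Qed.

Lemma ek_S k : e P (S @^-1` B k) S = cb P S B k * fine (P (S @^-1` B k)).
Proof.
have mk := mI mS hB k.
rewrite /cb /condE_ev -/(e P _ S).
have [pz|pn] := eqVneq (fine (P (S @^-1` B k))) 0; last by rewrite divfK.
rewrite pz mulr0.
have h1 : e P (S @^-1` B k) S <= e P (S @^-1` B k) (fun _ => 1).
  apply: e_le => //; [exact: bmS | exact: bm_cst | move=> u _; by case/andP: (S01 u)].
have h0 : e P (S @^-1` B k) (fun _ => 0) <= e P (S @^-1` B k) S.
  apply: e_le => //; [exact: bm_cst | exact: bmS | move=> u _; by case/andP: (S01 u)].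
rewrite !e_cst // pz !mulr0 in h0 h1.
by apply/eqP; rewrite eq_le h1 h0.
Qed.

Lemma bin_var k a b : (forall x, B k x -> a <= x <= b) ->
  e P (S @^-1` B k) (fun u => (S u - cb P S B k) ^+ 2) <=
  ((b - a) / 2) ^+ 2 * fine (P (S @^-1` B k)).
Proof.
move=> hab; have mk := mI mS hB k; have bS := bmS.
set c := cb P S B k; set pk := fine (P (S @^-1` B k)).
have pk0 : 0 <= pk by exact: fine_ge0.
set mid := (a + b) / 2; set w := (b - a) / 2.
have E : e P (S @^-1` B k) (fun u => (S u - c) ^+ 2) =
   e P (S @^-1` B k) (fun u => (S u - mid) ^+ 2) + 2 * (mid - c) * (c * pk)
   + (c ^+ 2 - mid ^+ 2) * pk.
  transitivity (e P (S @^-1` B k) (fun u => (1 * (S u - mid) ^+ 2 + (2 * (mid - c)) * S u)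
      + (c ^+ 2 - mid ^+ 2))).
    by apply: e_congr => u _; ring.
  rewrite eD //; try by bmt.
  rewrite e_lin //; try by bmt.
  by rewrite e_cst // ek_S /c /pk mul1r.
have H : e P (S @^-1` B k) (fun u => (S u - mid) ^+ 2) <= w ^+ 2 * pk.
  rewrite -e_cst //; apply: e_le => //; try by bmt.
  move=> u /hab /andP[h1 h2].
  have -> : (S u - mid) ^+ 2 = w ^+ 2 - (S u - a) * (b - S u) by rewrite /w /mid; field.
  by rewrite lerBlDr lerDl; apply: mulr_ge0; rewrite subr_ge0.
rewrite E -addrA.
have -> : 2 * (mid - c) * (c * pk) + (c ^+ 2 - mid ^+ 2) * pk = - ((mid - c) ^+ 2 * pk) by ring.
have : 0 <= (mid - c) ^+ 2 * pk by apply: mulr_ge0 => //; exact: sqr_ge0.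
lra.
Qed.

Lemma VS_le t : equal_width_bins B -> condVar_given P SB S t <= (2 * J%:R)^-1 ^+ 2.
Proof.
move=> ew; have bS := bmS.
rewrite VarE.
have mA : measurable (L t) by exact: mL.
set A := L t; set q := p t; set s0 := SB t.
have q0 : 0 <= q by exact: p_ge0.
have [qz|qn] := eqVneq q 0.
  by rewrite qz invr0 mulr0; exact: sqr_ge0.
have qp : 0 < q by rewrite lt_def qn q0.
have [j0 _] := ex_bin S01 hB t.
have J0 : (0 < J)%N := leq_ltn_trans (leq0n _) (ltn_ord j0).
have JR : J%:R != 0 :> R by rewrite pnatr_eq0 -lt0n.
set w := (2 * J%:R)^-1.
have hq : q = \sum_(k < J) (cb P S B k == s0)%:R * fine (P (S @^-1` B k)).
  rewrite /q /p -/A -e1 // eL_sum; last exact: bm_cst.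
  by apply: eq_bigr => k _; rewrite e1 //; exact: mI.
have hm : e P A S = s0 * q.
  rewrite eL_sum // hq mulr_sumr; apply: eq_bigr => k _.
  by rewrite ek_S; case: eqP => [->|_]; rewrite ?mul0r ?mulr0 ?mul1r...
have -> : e P A S / q = s0 by rewrite hm mulfK.
rewrite ler_pdivrMr // eL_sum; last by bmt.
rewrite hq mulr_sumr; apply: ler_sum => k _.
case: eqP => [E|_]; last by rewrite !mul0r mulr0.
have -> : s0 = cb P S B k by rewrite /s0 E.
rewrite !mul1r.
have := @bin_var k (k%:R / J%:R) (k.+1%:R / J%:R).
have -> : ((k.+1%:R / J%:R - k%:R / J%:R) / 2) = w by rewrite /w -addn1 natrD; field.
apply => x /(proj2 (ew k)); rewrite /= in_itv /=; exact.
Qed.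

Lemma cov_abs t : `|condCov_given P SB S C t| <=
  Num.sqrt (condVar_given P SB S t) * Num.sqrt (condVar_given P SB C t).
Proof. by rewrite -sqrtrM ?VS_ge0 // -sqrtr_sqr ler_wsqrtr // cs_t. Qed.

Lemma bounds_ew t : equal_width_bins B ->
  - (J%:R^-1) * Num.sqrt (condE_given P SB C t * (1 - condE_given P SB C t))
    - (4 * J%:R ^+ 2)^-1
  <= 2 * condCov_given P SB S C t - condVar_given P SB S t
  <= J%:R^-1 * Num.sqrt (condE_given P SB C t * (1 - condE_given P SB C t)).
Proof.
move=> ew.
have [j0 _] := ex_bin S01 hB t.
have J0 : (0 < J)%N := leq_ltn_trans (leq0n _) (ltn_ord j0).
have JR : J%:R != 0 :> R by rewrite pnatr_eq0 -lt0n.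
have Jp : 0 < J%:R :> R by rewrite ltr0n.
have hC := cov_abs t; move: hC; rewrite ler_norml => /andP[h1 h2].
have hVS := VS_le t ew; have hVC := VC_le t.
have vs0 := VS_ge0 S t.
set VS := condVar_given P SB S t in hVS h1 h2 vs0 *.
set VC := condVar_given P SB C t in hVC h1 h2 *.
set Cv := condCov_given P SB S C t in h1 h2 *.
set m := condE_given P SB C t in hVC *.
set w := (2 * J%:R)^-1 in hVS.
have w0 : 0 <= w by rewrite /w invr_ge0 mulr_ge0 // ler0n.
have hsS : Num.sqrt VS <= w by rewrite -(ger0_norm w0) -sqrtr_sqr ler_wsqrtr.
have hsC : Num.sqrt VC <= Num.sqrt (m * (1 - m)) by rewrite ler_wsqrtr.
set sS := Num.sqrt VS in h1 h2 hsS *; set sC := Num.sqrt VC in h1 h2 hsC *.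
set sq := Num.sqrt (m * (1 - m)) in hsC *.
have eVS : VS = sS ^+ 2 by rewrite /sS sqr_sqrtr.
have sS0 : 0 <= sS by exact: sqrtr_ge0.
have sC0 : 0 <= sC by exact: sqrtr_ge0.
have e1 : J%:R^-1 = 2 * w by rewrite /w; field.
have e2 : (4 * J%:R ^+ 2)^-1 = w ^+ 2 by rewrite /w; field.
have k1 : 0 <= (w - sS) * sC by apply: mulr_ge0; rewrite ?subr_ge0.
have k2 : 0 <= w * (sq - sC) by apply: mulr_ge0; rewrite ?subr_ge0.
have k3 : 0 <= (w - sS) * (w + sS) by apply: mulr_ge0; rewrite ?subr_ge0 ?addr_ge0.
clearbody sS sC sq w; rewrite eVS e1 e2.
apply/andP; split; nra.
Qed.

Lemma main_thm :
  let CB := condE_given P SB C in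
  let CL := (- 'E_P[condVar_given P SB (fun t => S t - C t)%R])%E in
  let GL := ('E_P[condVar_given P SB C])%E in
  [/\ (CL + GL = 'E_P[(fun t => 2 * condCov_given P SB S C t
                               - condVar_given P SB S t)%R])%E,
      (- 'E_P[(fun t => Num.sqrt (condVar_given P SB S t)
               * (2 * Num.sqrt (condVar_given P SB C t)
                  + Num.sqrt (condVar_given P SB S t)))%R] <= CL + GL)%E,
      (CL + GL <= 'E_P[(fun t => Num.sqrt (condVar_given P SB S t)
               * (2 * Num.sqrt (condVar_given P SB C t)
                  - Num.sqrt (condVar_given P SB S t)))%R])%E &
      (equal_width_bins B ->
       (- (J%:R^-1)%:E * 'E_P[(fun t => Num.sqrt (CB t * (1 - CB t)))%R]
          - ((4 * J%:R ^+ 2)^-1)%:E <= CL + GL)%E /\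
       (CL + GL <= (J%:R^-1)%:E * 'E_P[(fun t => Num.sqrt (CB t * (1 - CB t)))%R])%E)].
Proof.
move=> CB CL GL.
have lvl (G : T -> R) : (forall u v, SB u = SB v -> G u = G v) -> bm G by exact: bmSB_fun.
have bVD : bm (condVar_given P SB (fun t => S t - C t)).
  by apply: lvl => u v E; rewrite /condVar_given /condE_given E.
have bVC : bm (condVar_given P SB C).
  by apply: lvl => u v E; rewrite /condVar_given /condE_given E.
have bF2 : bm (fun t => 2 * condCov_given P SB S C t - condVar_given P SB S t).
  by apply: lvl => u v E; rewrite /condVar_given /condCov_given /condE_given E.
have bLo : bm (fun t => Num.sqrt (condVar_given P SB S t)
               * (2 * Num.sqrt (condVar_given P SB C t)
                  + Num.sqrt (condVar_given P SB S t))).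
  by apply: lvl => u v E; rewrite /condVar_given /condE_given E.
have bUp : bm (fun t => Num.sqrt (condVar_given P SB S t)
               * (2 * Num.sqrt (condVar_given P SB C t)
                  - Num.sqrt (condVar_given P SB S t))).
  by apply: lvl => u v E; rewrite /condVar_given /condE_given E.
have bsq : bm (fun t => Num.sqrt (CB t * (1 - CB t))).
  by apply: lvl => u v E; rewrite /CB /condE_given E.
have H1 : (CL + GL = 'E_P[(fun t => 2 * condCov_given P SB S C t
                               - condVar_given P SB S t)%R])%E.
  rewrite /CL /GL (rEE P bVD) (rEE P bVC) (rEE P bF2) -EFinN -EFinD; congr EFin.
  have -> : (fun t => 2 * condCov_given P SB S C t - condVar_given P SB S t) =
      (fun t => (-1) * condVar_given P SB (fun t => S t - C t) t
                + 1 * condVar_given P SB C t).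
    by apply/funext => t; rewrite id_t; ring.
  by rewrite rE_lin //; ring.
split => //; rewrite H1 (rEE P bF2).
- rewrite (rEE P bLo) -EFinN lee_fin -mulN1r -rEZ //.
  by apply: rE_le => //; [exact: bmZ | move=> t; rewrite mulN1r; case/andP: (bounds_t t)].
- rewrite (rEE P bUp) lee_fin.
  by apply: rE_le => // t; case/andP: (bounds_t t).
move=> ew; split.
- rewrite (rEE P bsq) -EFinN -EFinM -EFinB lee_fin.
  have -> : - J%:R^-1 * rE P (fun t => Num.sqrt (CB t * (1 - CB t))) - (4 * J%:R ^+ 2)^-1
     = rE P (fun t => (- J%:R^-1) * Num.sqrt (CB t * (1 - CB t))
                      + (- (4 * J%:R ^+ 2)^-1) * 1).
    by rewrite rE_lin //; [rewrite rE_cst; ring | exact: bm_cst].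
  apply: rE_le => //; first by (apply: bmD; apply: bmZ => //; exact: bm_cst).
  by move=> t; rewrite mulr1; case/andP: (bounds_ew t ew).
- rewrite (rEE P bsq) -EFinM lee_fin -rEZ //.
  apply: rE_le => //; first exact: bmZ.
  by move=> t; case/andP: (bounds_ew t ew).
Qed.

End Main.


Section Final.
Context d (T : measurableType d) (R : realType) (P : probability T R).

Lemma null_of_pos (Z : T -> R) (D : set T) : measurable D ->
  P.-integrable setT (EFin \o (fun t => Z t * \1_D t)) ->
  (\int[P]_t (Z t * \1_D t)%:E = 0)%E -> (forall t, D t -> 0 < Z t) -> P D = 0.
Proof.
move=> mD iF F0 Zp.
have F_ge0 t : 0 <= Z t * \1_D t.
  rewrite indicE; case: (boolP (t \in D)) => h; last by rewrite mulr0.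
  by rewrite mulr1 ltW // Zp //; exact: set_mem.
have mF := measurable_int P iF.
have : (\int[P]_t `|(Z t * \1_D t)%:E| = 0)%E.
  rewrite -F0; apply: eq_integral => t _; by rewrite gee0_abs // lee_fin.
move/(ae_eq_integral_abs P measurableT mF) => [N [mN PN sub]].
apply: (subset_measure0 mD mN _ PN) => t Dt; apply: sub => /=.
move=> /(_ I) /=; rewrite indicE mem_set // mulr1 => -[] /eqP.
by rewrite gt_eqF // Zp.
Qed.

Lemma condE_given_ae (Z : T -> R) (X X' : T -> R) :
  (forall z, measurable (Z @^-1` [set z])) ->
  measurable_fun setT X -> measurable_fun setT X' ->
  {ae P, forall t, X t = X' t} -> condE_given P Z X = condE_given P Z X'.
Proof.
move=> mZ mX mX' hae; apply/funext => t; rewrite /condE_given /condE_ev.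
congr (fine _ / _); rewrite unlock; apply: ae_eq_integral => //.
- apply/measurable_EFinP; apply: measurable_funM => //; exact: measurable_indic.
- apply/measurable_EFinP; apply: measurable_funM => //; exact: measurable_indic.
- by move: hae; apply: filterS => u /= -> _.
Qed.

End Final.

Unset Implicit Arguments.

Theorem theorem2 (d : measure_display) (T : measurableType d) (R : realType)
  (P : probability T R)
  (dX : measure_display) (TX : measurableType dX)
  (X : T -> TX) (Y : T -> R) (f : TX -> R) (Q C : T -> R)
  (J : nat) (B : 'I_J -> set R) :
  measurable_fun [set: T] X ->
  measurable_fun [set: T] Y ->
  (forall t, Y t = 0 \/ Y t = 1) ->
  (* Q = P(Y = 1 | X), a [0,1]-valued version *)
  is_cond_exp P X (fun t => \1_[set u | Y u = 1] t) Q ->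
  (forall t, 0 <= Q t <= 1) ->
  (* S = f(X) is a confidence score in [0,1] *)
  measurable_fun [set: TX] f ->
  (forall x, 0 <= f x <= 1) ->
  (* C = E[Q | S] *)
  is_cond_exp P (f \o X) Q C ->
  interval_partition01 B ->
  let S := f \o X in
  let SB := binned_score P B S in
  let CB := condE_given P SB C in
  let CL := (- 'E_P[condVar_given P SB (fun t => S t - C t)%R])%E in
  let GL := ('E_P[condVar_given P SB C])%E in
  [/\ (CL + GL = 'E_P[(fun t => 2 * condCov_given P SB S C t
                               - condVar_given P SB S t)%R])%E,
      (- 'E_P[(fun t => Num.sqrt (condVar_given P SB S t)
               * (2 * Num.sqrt (condVar_given P SB C t)
                  + Num.sqrt (condVar_given P SB S t)))%R] <= CL + GL)%E,
      (CL + GL <= 'E_P[(fun t => Num.sqrt (condVar_given P SB S t)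
               * (2 * Num.sqrt (condVar_given P SB C t)
                  - Num.sqrt (condVar_given P SB S t)))%R])%E &
      (equal_width_bins B ->
       (- (J%:R^-1)%:E * 'E_P[(fun t => Num.sqrt (CB t * (1 - CB t)))%R]
          - ((4 * J%:R ^+ 2)^-1)%:E <= CL + GL)%E /\
       (CL + GL <= (J%:R^-1)%:E * 'E_P[(fun t => Num.sqrt (CB t * (1 - CB t)))%R])%E)].
Proof.
move=> mX mY Y01 [[g' [mg' Qg]] _ _] Q01 mf f01 [[g [mg Cg]] iC hC] hB S SB CB CL GL.
have mS : measurable_fun setT S by exact: measurableT_comp.
have S01 t : 0 <= S t <= 1 by exact: f01.
have mQ : measurable_fun setT Q by rewrite Qg; exact: measurableT_comp.
have mC : measurable_fun setT C by rewrite Cg; exact: measurableT_comp.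
have bQ : bm Q.
  by split => //; exists 1 => t; have /andP[h0 h1] := Q01 t; rewrite ger0_norm.
(* C lies in [0,1] almost everywhere *)
have key (D : set R) (sg : R) : measurable D ->
    (forall t, D (S t) -> 0 < sg * (C t - Q t)) -> P (S @^-1` D) = 0.
  move=> mD pos.
  have mSD : measurable (S @^-1` D) by rewrite -[_ @^-1` _]setTI; apply: mS.
  have iC1 : P.-integrable setT (EFin \o (fun t => C t * \1_(S @^-1` D) t)).
    have -> : EFin \o (fun t => C t * \1_(S @^-1` D) t) =
        ((EFin \o C) \* (EFin \o (\1_(S @^-1` D) : T -> R)))%E.
      by apply/funext => t /=; rewrite -EFinM.
    apply: integrableMl; [by [] | exact: iC | exact: measurable_indic |].
    exists 1; split; first exact: num_real.
    move=> y hy t _ /=; apply: le_trans (ltW hy).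
    rewrite indicE; case: (_ \in _); by rewrite ?normr1 ?normr0.
  have iQ1 : P.-integrable setT (EFin \o (fun t => Q t * \1_(S @^-1` D) t)).
    by apply: bm_int; apply: bmI.
  apply: (null_of_pos (Z := fun t => sg * (C t - Q t))) => //.
  - have -> : EFin \o (fun t => sg * (C t - Q t) * \1_(S @^-1` D) t) =
       ((EFin \o (fun t => (sg * (C t * \1_(S @^-1` D) t)))%R) \-
        (EFin \o (fun t => sg * (Q t * \1_(S @^-1` D) t))%R))%E.
      by apply/funext => t /=; rewrite -EFinB; congr EFin; ring.
    apply: integrableB => //.
      have -> : EFin \o (fun t => sg * (C t * \1_(S @^-1` D) t)) =
          (fun t => sg%:E * (EFin \o (fun t => C t * \1_(S @^-1` D) t)%R) t)%E.
        by apply/funext => t /=; rewrite -EFinM.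
      exact: integrableZl.
    have -> : EFin \o (fun t => sg * (Q t * \1_(S @^-1` D) t)) =
        (fun t => sg%:E * (EFin \o (fun t => Q t * \1_(S @^-1` D) t)%R) t)%E.
      by apply/funext => t /=; rewrite -EFinM.
    exact: integrableZl.
  - have -> : (fun t => (sg * (C t - Q t) * \1_(S @^-1` D) t)%:E) =
       (fun t => ((sg * (C t * \1_(S @^-1` D) t))%R)%:E - ((sg * (Q t * \1_(S @^-1` D) t))%R)%:E)%E.
      by apply/funext => t /=; rewrite -EFinB; congr EFin; ring.
    rewrite integralB_EFin //; last 2 first.
      have -> : EFin \o (fun t => sg * (C t * \1_(S @^-1` D) t)) =
          (fun t => sg%:E * (EFin \o (fun t => C t * \1_(S @^-1` D) t)%R) t)%E.
        by apply/funext => t /=; rewrite -EFinM.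
      exact: integrableZl.
      have -> : EFin \o (fun t => sg * (Q t * \1_(S @^-1` D) t)) =
          (fun t => sg%:E * (EFin \o (fun t => Q t * \1_(S @^-1` D) t)%R) t)%E.
        by apply/funext => t /=; rewrite -EFinM.
      exact: integrableZl.
    under eq_integral do rewrite EFinM.
    rewrite integralZl //.
    under [X in (_ - X)%E]eq_integral do rewrite EFinM.
    rewrite integralZl //.
    have := hC D mD; rewrite unlock => <-.
    by rewrite subee // fin_numM // integrable_fin_num.
pose C' := fun t => Num.min (Num.max (C t) 0) 1.
have mC' : measurable_fun setT C'.
  by apply: measurable_minr; [apply: measurable_maxr => //|]; exact: measurable_cst.
have C'01 t : 0 <= C' t <= 1.
  rewrite /C' le_min le_max lexx orbT ler01 /= ge_min lexx orbT //.
have mg1 : measurable (g @^-1` `]1, +oo[%classic).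
  by rewrite -[_ @^-1` _]setTI; apply: mg => //; exact: measurable_itv.
have mg0 : measurable (g @^-1` `]-oo, 0[%classic).
  by rewrite -[_ @^-1` _]setTI; apply: mg => //; exact: measurable_itv.
have CgE t : C t = g (S t) by rewrite Cg.
have N1 : P (S @^-1` (g @^-1` `]1, +oo[%classic)) = 0%E.
  apply: (key _ 1) => // t; rewrite /= in_itv /= andbT -CgE mul1r => h.
  by have /andP[_ q1] := Q01 t; rewrite subr_gt0 (le_lt_trans q1 h).
have N0 : P (S @^-1` (g @^-1` `]-oo, 0[%classic)) = 0%E.
  apply: (key _ (-1)) => // t; rewrite /= in_itv /= -CgE mulN1r => h.
  by have /andP[q0 _] := Q01 t; rewrite oppr_gt0 subr_lt0 (lt_le_trans h q0).
have mN1 : measurable (S @^-1` (g @^-1` `]1, +oo[%classic)).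
  by rewrite -[_ @^-1` _]setTI; apply: mS.
have mN0 : measurable (S @^-1` (g @^-1` `]-oo, 0[%classic)).
  by rewrite -[_ @^-1` _]setTI; apply: mS.
have hae : {ae P, forall t, C t = C' t}.
  exists (S @^-1` (g @^-1` `]1, +oo[%classic) `|` S @^-1` (g @^-1` `]-oo, 0[%classic)).
  split; first exact: measurableU.
    by rewrite measureU0.
  move=> t /= hne; apply: contrapT => /not_orP [/negP h1 /negP h0]; apply: hne.
  move: h1 h0; rewrite /= !in_itv /= andbT -!CgE -leNgt -leNgt => h1 h0.
  rewrite /C' (_ : Num.max (C t) 0 = C t); last by rewrite max_l.
  by rewrite min_l.
have mLz' z : measurable (SB @^-1` [set z]) by exact: (mLz P mS S01 hB z).
have bmc X0 : bm (condE_given P SB X0).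
  by apply: (@bmG _ _ _ P _ _ _ mS S01 hB) => u v E; rewrite -/SB in E; rewrite /condE_given E.
have mcE X0 : measurable_fun setT (condE_given P SB X0) by case: (bmc X0).
have hC0 : condE_given P SB C = condE_given P SB C'.
  exact: condE_given_ae.
have hD0 : condE_given P SB (fun t => S t - C t) = condE_given P SB (fun t => S t - C' t).
  apply: condE_given_ae => //; try exact: measurable_funB.
  by move: hae; apply: filterS => u /= ->.
have hVD : condVar_given P SB (fun t => S t - C t) = condVar_given P SB (fun t => S t - C' t).
  rewrite /condVar_given hD0; apply: condE_given_ae => //;
    try (apply: measurable_funX; apply: measurable_funB => //; exact: measurable_funB).
  by move: hae; apply: filterS => u /= ->.
have hVC : condVar_given P SB C = condVar_given P SB C'.
  rewrite /condVar_given hC0; apply: condE_given_ae => //;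
    try (apply: measurable_funX; exact: measurable_funB).
  by move: hae; apply: filterS => u /= ->.
have hCov : condCov_given P SB S C = condCov_given P SB S C'.
  rewrite /condCov_given hC0; apply: condE_given_ae => //;
    try (apply: measurable_funM; exact: measurable_funB).
  by move: hae; apply: filterS => u /= ->.
rewrite /CL /GL /CB hVD hVC hCov hC0.
exact: (main_thm P mS S01 mC' C'01 hB).
Qed.
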